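(* For integers $n\geqslant 1$ and $m\geqslant 0$ let $\delta_{n,m}$ be the number of M-partitions $\lambda$ of type $(n,n,m)$ with $\lambda_{=2}=\{\mathbf e_1+\mathbf e_i: i=1,\dots,n\}\subset\mathbb N^n$ (with $\delta_{n,0}=0$). Then $\Phi_n(t)=\sum_{m\geqslant 0}\delta_{n,m}t^m$ satisfies \[ \Phi_1(t)=\sum_{i\geqslant 1}t^i,\qquad \Phi_n(t)=\sum_{i\geqslant 1}t^{\,i+n-2}\Big(\frac{1-t^i}{1-t}\Big)^{n-1}\quad(n\geqslant 2). \]
   Context: Let $\mathbb N=\mathbb Z_{\geqslant 0}$ with the componentwise order and $\mathbf e_i$ the standard basis vectors. $\mathrm P^n_d$ is the set of subsets $\lambda\subset\mathbb N^n$ of size $d$ closed downward. The degree of a point is the sum of its coordinates; $\lambda_{=i}$, $\lambda_{\geqslant i}$ are the elements of degree $i$, resp. $\geqslant i$; $h_\lambda(i)=|\lambda_{=i}|$; $\mathrm{Soc}(\lambda)$ is the set of maximal elements. For positive integers $k,q,m$, an M-partition of type $(k,q,m)$ is $\lambda\in\mathrm P^k_{1+k+q+m}$ with $\mathrm{Soc}(\lambda)\subset\lambda_{\geqslant3}$, $h_\lambda(1)=k$, $h_\lambda(2)=q$, $\sum_{i\geqslant3}h_\lambda(i)=m$. *)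

(* Defs.v *)
From HB Require Import structures.
From mathcomp Require Import all_boot all_order ssralg ssrint poly finmap.
Set Implicit Arguments. Unset Strict Implicit. Unset Printing Implicit Defensive.
Import GRing.Theory.
Local Open Scope fset_scope.

Notation pt n := {ffun 'I_n -> nat}.

Definition ple n (x y : pt n) : bool := [forall i, x i <= y i].

(* standard basis vector e_{i+1} (0-indexed: e 0 is e_1) *)
Definition ebasis n (i : nat) : pt n := [ffun j : 'I_n => nat_of_bool (val j == i)].

Definition padd n (x y : pt n) : pt n := [ffun j => (x j + y j)%N].

Definition pdeg n (x : pt n) : nat := (\sum_(i < n) x i)%N.

Definition layer_eq n (lam : {fset pt n}) (i : nat) : {fset pt n} :=
  [fset x in lam | pdeg x == i].
Definition layer_ge n (lam : {fset pt n}) (i : nat) : {fset pt n} :=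
  [fset x in lam | i <= pdeg x].

Definition hfun n (lam : {fset pt n}) (i : nat) : nat := #|` layer_eq lam i|.

Definition down_closed n (lam : {fset pt n}) : Prop :=
  forall x y : pt n, y \in lam -> ple x y -> x \in lam.

Definition in_P n (d : nat) (lam : {fset pt n}) : Prop :=
  down_closed lam /\ #|` lam| = d.

Definition is_soc n (lam : {fset pt n}) (x : pt n) : Prop :=
  x \in lam /\ forall y, y \in lam -> ple x y -> y = x.

Definition Mpartition (k q m : nat) (lam : {fset pt k}) : Prop :=
  [/\ 0 < k, 0 < q & 0 < m] /\
  [/\ in_P (1 + k + q + m) lam,
      (forall x, is_soc lam x -> x \in layer_ge lam 3),
      hfun lam 1 = k,
      hfun lam 2 = q &
      #|` layer_ge lam 3| = m].

Arguments Mpartition : clear implicits.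

Definition delta_set (n m : nat) (lam : {fset pt n}) : Prop :=
  Mpartition n n m lam /\
  (forall x : pt n, x \in layer_eq lam 2 <->
     exists i : 'I_n, x = padd (ebasis n 0) (ebasis n (val i))).
Arguments delta_set : clear implicits.

(* Main.v *)
Require Import Defs.
From HB Require Import structures.
From mathcomp Require Import all_boot all_order ssralg ssrint poly finmap.
From mathcomp Require Import zify.
Set Implicit Arguments. Unset Strict Implicit. Unset Printing Implicit Defensive.
Import GRing.Theory.
Local Open Scope fset_scope.
Local Open Scope nat_scope.

Definition p0 k (a : nat) : pt k.+1 := [ffun j : 'I_k.+1 => if j == ord0 then a else 0].
Definition p1 k (a : nat) (i : 'I_k) : pt k.+1 :=
  [ffun j : 'I_k.+1 => if j == ord0 then a else nat_of_bool (j == lift ord0 i)].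

Arguments p0 {k}. Arguments p1 {k}.

Lemma p0_0 k a : (@p0 k) a ord0 = a. Proof. by rewrite ffunE eqxx. Qed.
Lemma p0_l k a j : (@p0 k) a (lift ord0 j) = 0. Proof. by rewrite ffunE. Qed.
Lemma p1_0 k a i : (@p1 k) a i ord0 = a. Proof. by rewrite ffunE eqxx. Qed.
Lemma p1_l k a i j : (@p1 k) a i (lift ord0 j) = nat_of_bool (j == i).
Proof. by rewrite ffunE /= (inj_eq (@lift_inj _ ord0)). Qed.

Lemma ffun_ext0 k (x y : pt k.+1) :
  x ord0 = y ord0 -> (forall j, x (lift ord0 j) = y (lift ord0 j)) -> x = y.
Proof. by move=> h0 hl; apply/ffunP => j; case: (unliftP ord0 j) => [j'|] ->. Qed.

Lemma ple0 k (x y : pt k.+1) :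
  ple x y = (x ord0 <= y ord0) && [forall j, x (lift ord0 j) <= y (lift ord0 j)].
Proof.
apply/forallP/andP => [h|[h0 /forallP hl] j]; first by split => //; apply/forallP.
by case: (unliftP ord0 j) => [j'|] ->.
Qed.

Lemma pdeg0 k (x : pt k.+1) : pdeg x = x ord0 + \sum_(j < k) x (lift ord0 j).
Proof. by rewrite /pdeg big_ord_recl. Qed.

Lemma sum_ind k (i : 'I_k) : \sum_(j < k) nat_of_bool (j == i) = 1.
Proof. by rewrite (bigD1 i) //= eqxx big1 // => j /negPf ->. Qed.

Lemma pdeg_p0 k a : pdeg ((@p0 k) a) = a.
Proof. by rewrite pdeg0 p0_0 big1 ?addn0 // => j _; rewrite p0_l. Qed.
Lemma pdeg_p1 k a i : pdeg ((@p1 k) a i) = a + 1.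
Proof. by rewrite pdeg0 p1_0; under eq_bigr do rewrite p1_l; rewrite sum_ind. Qed.

Lemma p0_inj k : injective (@p0 k).
Proof. by move=> a b e; have := congr1 (fun x : pt k.+1 => x ord0) e; rewrite /= !p0_0. Qed.
Lemma p1_inj k a b i j : (@p1 k) a i = (@p1 k) b j -> a = b /\ i = j.
Proof.
move=> e; have := congr1 (fun x : pt k.+1 => x ord0) e; have := congr1 (fun x : pt k.+1 => x (lift ord0 i)) e.
rewrite /= !p1_0 !p1_l eqxx; case: eqP => // -> _ //.
Qed.
Lemma p0p1 k a b i : (@p0 k) a <> (@p1 k) b i.
Proof. by move=> e; have := congr1 (fun x : pt k.+1 => x (lift ord0 i)) e; rewrite /= p0_l p1_l eqxx. Qed.

Lemma card_sep (T : choiceType) (s : seq T) (P : pred T) : uniq s ->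
  #|` [fset x in [fset y in s] | P x]| = count P s.
Proof.
move=> us.
have -> : [fset x in [fset y in s] | P x] = [fset x in filter P s].
  by apply/fsetP => x; rewrite !inE mem_filter andbC.
by rewrite card_fseq undup_id ?size_filter // filter_uniq.
Qed.
Lemma card_seqf (T : choiceType) (s : seq T) : uniq s -> #|` [fset y in s]| = size s.
Proof. by move=> us; rewrite card_fseq undup_id. Qed.

Definition ptc k (c : option 'I_k * nat) : pt k.+1 :=
  if c.1 is Some i then p1 c.2 i else p0 c.2.

Lemma ptc_inj k : injective (@ptc k).
Proof.
move=> [[i|] a] [[j|] b] /=; rewrite /ptc /=.
- by move/p1_inj => [-> ->].
- by move/esym/p0p1.
- by move/p0p1.
- by move/p0_inj => ->.
Qed.

Definition codes k A (B : 'I_k -> nat) : seq (option 'I_k * nat) :=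
  [seq (None, a) | a <- iota 0 A.+1] ++ [seq (Some i, a) | i <- enum 'I_k, a <- iota 0 (B i).+1].

Definition mk k A (B : 'I_k -> nat) : {fset pt k.+1} := [fset x in map (@ptc k) (codes A B)].

Lemma codes_uniq k A (B : 'I_k -> nat) : uniq (codes A B).
Proof.
rewrite cat_uniq (map_inj_uniq (f := pair None)) ?iota_uniq; last by move=> a b [].
apply/and3P; split; first by [].
  apply/negP; move/hasP; case=> c; move/allpairsPdep; case=> [i [a [_ _ ->]]]; move/mapP; by case.
apply: allpairs_uniq_dep; first exact: enum_uniq.
  by move=> i _; exact: iota_uniq.
move=> [i a] [j b] _ _ /= [e1 e2]; subst; done.
Qed.

Lemma mk_uniq k A (B : 'I_k -> nat) : uniq (map (@ptc k) (codes A B)).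
Proof. by rewrite map_inj_uniq ?codes_uniq //; exact: ptc_inj. Qed.

Lemma mem_codes k A (B : 'I_k -> nat) c :
  (c \in codes A B) = (if c.1 is Some i then c.2 <= B i else c.2 <= A).
Proof.
case: c => [[i|] a] /=; rewrite mem_cat.
- apply/orP/idP => [[/mapP[?]//|/allpairsPdep[j [b [_ hb [-> ->]]]]]|h].
    by rewrite mem_iota in hb.
  by right; apply/allpairsPdep; exists i, a; rewrite mem_enum mem_iota.
- apply/orP/idP => [[/mapP[b hb [->]]|/allpairsPdep[j [b [_ hb ]]]//]|h].
    by rewrite mem_iota in hb.
  by left; apply/mapP; exists a; rewrite // mem_iota.
Qed.

Lemma mem_mk k A (B : 'I_k -> nat) x :
  (x \in mk A B) = has (fun c => x == ptc c) (codes A B).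
Proof.
rewrite /mk in_fset; apply/mapP/hasP => [[c hc ->]|[c hc /eqP ->]]; by exists c.
Qed.

Lemma mem_mk_ptc k A (B : 'I_k -> nat) c :
  (ptc c \in mk A B) = (c \in codes A B).
Proof. by rewrite /mk in_fset mem_map //; exact: ptc_inj. Qed.

Lemma mem_mk_p0 k A (B : 'I_k -> nat) a : (p0 a \in mk A B) = (a <= A).
Proof. by rewrite -[p0 a]/(ptc (None, a)) mem_mk_ptc mem_codes. Qed.
Lemma mem_mk_p1 k A (B : 'I_k -> nat) a i : (p1 a i \in mk A B) = (a <= B i).
Proof. by rewrite -[p1 a i]/(ptc (Some i, a)) mem_mk_ptc mem_codes. Qed.

Lemma mk_inv k A (B : 'I_k -> nat) x : x \in mk A B ->
  (exists2 a, a <= A & x = p0 a) \/ (exists i, exists2 a, a <= B i & x = p1 a i).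
Proof.
rewrite mem_mk => /hasP [[[i|] a] hc /eqP ->]; rewrite mem_codes /= in hc.
  by right; exists i, a.
by left; exists a.
Qed.

Lemma count_mk k A (B : 'I_k -> nat) (P : pred (pt k.+1)) :
  count P (map (@ptc k) (codes A B)) =
  count (fun a => P (p0 a)) (iota 0 A.+1) +
  \sum_(i < k) count (fun a => P (p1 a i)) (iota 0 (B i).+1).
Proof.
rewrite count_map count_cat count_map count_flatten sumnE big_map big_map big_enum.
congr (_ + _); apply: eq_bigr => i _; by rewrite count_map.
Qed.

Lemma count_ge_iota k N : count (fun a => k <= a) (iota 0 N) = N - k.
Proof.
elim: N => // N IH; rewrite -addn1 iotaD count_cat IH /= add0n addn0.
case: (leqP k N) => h; lia.
Qed.

Lemma count_eq_iota k N : count (fun a => a == k) (iota 0 N) = (k < N).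
Proof.
have -> : (fun a => a == k) = pred1 k by [].
by rewrite count_uniq_mem ?iota_uniq // mem_iota add0n.
Qed.

Lemma card_mk k A (B : 'I_k -> nat) : #|` mk A B| = A.+1 + \sum_(i < k) (B i).+1.
Proof.
rewrite /mk card_seqf ?mk_uniq // -(count_predT) count_mk !count_predT size_iota.
by under eq_bigr do rewrite count_predT size_iota.
Qed.

Lemma h1_mk k A (B : 'I_k -> nat) : 1 <= A -> hfun (mk A B) 1 = k.+1.
Proof.
move=> hA; rewrite /hfun /layer_eq /mk card_sep ?mk_uniq // count_mk.
under eq_count => a do rewrite pdeg_p0.
rewrite count_eq_iota ltnS hA.
under eq_bigr => i _ do (under eq_count => a do rewrite pdeg_p1 addn1 eqSS;
  rewrite count_eq_iota).
by rewrite sum_nat_const card_ord muln1 add1n.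
Qed.

Lemma h2_mk k A (B : 'I_k -> nat) : 2 <= A -> (forall i, 1 <= B i) -> hfun (mk A B) 2 = k.+1.
Proof.
move=> hA hB; rewrite /hfun /layer_eq /mk card_sep ?mk_uniq // count_mk.
under eq_count => a do rewrite pdeg_p0.
rewrite count_eq_iota ltnS hA.
under eq_bigr => i _ do (under eq_count => a do rewrite pdeg_p1 addn1 eqSS;
  rewrite count_eq_iota ltnS hB).
by rewrite sum_nat_const card_ord muln1 add1n.
Qed.

Lemma ge3_mk k A (B : 'I_k -> nat) :
  #|` layer_ge (mk A B) 3| = (A - 2) + \sum_(i < k) (B i - 1).
Proof.
rewrite /layer_ge /mk card_sep ?mk_uniq // count_mk.
under eq_count => a do rewrite pdeg_p0.
rewrite count_ge_iota subSS.
congr (_ + _); apply: eq_bigr => i _.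
under eq_count => a do rewrite pdeg_p1 addn1 ltnS.
by rewrite count_ge_iota subSS.
Qed.

Lemma in_layer_eq n (lam : {fset pt n}) i x :
  (x \in layer_eq lam i) = (x \in lam) && (pdeg x == i).
Proof. by rewrite /layer_eq !inE. Qed.
Lemma in_layer_ge n (lam : {fset pt n}) i x :
  (x \in layer_ge lam i) = (x \in lam) && (i <= pdeg x).
Proof. by rewrite /layer_ge !inE. Qed.

Lemma ple_p0l k a (y : pt k.+1) : ple (p0 a) y = (a <= y ord0).
Proof.
rewrite ple0 p0_0; case: (a <= _) => //=; apply/forallP => j; by rewrite p0_l.
Qed.

Lemma ple_p1l k a i (y : pt k.+1) :
  ple (p1 a i) y = (a <= y ord0) && (1 <= y (lift ord0 i)).
Proof.
rewrite ple0 p1_0; case: (a <= _) => //=; apply/forallP/idP => [/(_ i)|h j].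
  by rewrite p1_l eqxx.
by rewrite p1_l; case: eqP => [->|].
Qed.

Lemma dec0 k (x : pt k.+1) : (forall j, x (lift ord0 j) = 0) -> x = p0 (x ord0).
Proof. by move=> h; apply: ffun_ext0 => [|j]; rewrite ?p0_0 ?p0_l ?h. Qed.

Lemma dec1 k (x : pt k.+1) i : x (lift ord0 i) = 1 ->
  (forall j, j != i -> x (lift ord0 j) = 0) -> x = p1 (x ord0) i.
Proof.
move=> h1 h; apply: ffun_ext0 => [|j]; rewrite ?p1_0 ?p1_l //.
by case: eqP => [->|/eqP /h]. 
Qed.

Lemma ple_p0r k (x : pt k.+1) a : ple x (p0 a) -> x = p0 (x ord0) /\ x ord0 <= a.
Proof.
rewrite ple0 p0_0 => /andP [h /forallP hl]; split => //; apply: dec0 => j.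
by have := hl j; rewrite p0_l; case: (x _).
Qed.

Lemma ple_p1r k (x : pt k.+1) a i : ple x (p1 a i) ->
  x ord0 <= a /\ (x = p0 (x ord0) \/ x = p1 (x ord0) i).
Proof.
rewrite ple0 p1_0 => /andP [h /forallP hl]; split => //.
have hj j : j != i -> x (lift ord0 j) = 0.
  by move=> /negPf nj; have := hl j; rewrite p1_l nj; case: (x _).
have := hl i; rewrite p1_l eqxx; case E: (x (lift ord0 i)) => [|[|]] // _.
  by left; apply: dec0 => j; case: (eqVneq j i) => [->|/hj].
by right; apply: dec1.
Qed.

Lemma mk_down k A (B : 'I_k -> nat) : (forall i, B i <= A) -> down_closed (mk A B).
Proof.
move=> hB x y /mk_inv [[a ha ->]|[i [a ha ->]]].
  move=> /ple_p0r [e h]; rewrite e mem_mk_p0; lia.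
move=> /ple_p1r [h [e|e]]; rewrite e ?mem_mk_p0 ?mem_mk_p1; have := hB i; lia.
Qed.

Lemma pe_0 k : padd (ebasis k.+1 0) (ebasis k.+1 (val (@ord0 k))) = p0 2.
Proof. by apply: ffun_ext0 => [|j]; rewrite !ffunE ?p0_0 ?p0_l. Qed.

Lemma pe_l k (j : 'I_k) : padd (ebasis k.+1 0) (ebasis k.+1 (val (lift ord0 j))) = p1 1 j.
Proof.
by apply: ffun_ext0 => [|j']; rewrite !ffunE ?p1_0 ?p1_l //=.
Qed.

Lemma mk_delta k A (B : 'I_k -> nat) m :
  2 <= A -> (forall i, 2 <= B i <= A) ->
  m = (A - 2) + \sum_(i < k) (B i - 1) -> 0 < m ->
  delta_set k.+1 m (mk A B).
Proof.
move=> hA hB hm m0.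
have hBA i : B i <= A by case/andP: (hB i).
have hB2 i : 2 <= B i by case/andP: (hB i).
split; last first.
  move=> x; split.
    rewrite in_layer_eq => /andP [xin /eqP hd].
    case/mk_inv: xin => [[a ha ex]|[i [a ha ex]]]; subst x.
      by exists ord0; rewrite pe_0; rewrite pdeg_p0 in hd; rewrite hd.
    exists (lift ord0 i); rewrite pe_l; rewrite pdeg_p1 in hd.
    by have -> : a = 1 by lia.
  case=> i ->; case: (unliftP ord0 i) => [j|] ->; rewrite ?pe_l ?pe_0 in_layer_eq.
    by rewrite mem_mk_p1 pdeg_p1 (leq_trans _ (hB2 j)).
  by rewrite mem_mk_p0 pdeg_p0 hA.
split; first by rewrite m0.
split.
- split; first exact: mk_down.
  rewrite card_mk hm.
  have -> : \sum_(i < k) (B i).+1 = \sum_(i < k) ((B i - 1) + 2).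
    by apply: eq_bigr => i _; have := hB2 i; lia.
  rewrite big_split /= sum_nat_const card_ord; lia.
- move=> x [xin hmax]; rewrite in_layer_ge xin /=.
  case/mk_inv: xin => [[a ha ex]|[i [a ha ex]]]; subst x.
    rewrite pdeg_p0; case: (leqP 3 a) => // ha3.
    case: (ltnP a A) => haA.
      have := hmax (p0 a.+1); rewrite mem_mk_p0 ple_p0l p0_0 => /(_ haA (leqnSn a)).
      by move/p0_inj; lia.
    case: (posnP k) => hk.
      subst k; move: hm; rewrite big_ord0; lia.
    have := hmax (p1 a (Ordinal hk)); rewrite mem_mk_p1 ple_p0l p1_0 leqnn.
    have -> : a <= B (Ordinal hk) by have := hB2 (Ordinal hk); lia.
    by move=> /(_ isT isT) /esym /p0p1.
  rewrite pdeg_p1; case: (leqP 3 (a + 1)) => // ha3.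
  have := hmax (p1 a.+1 i); rewrite mem_mk_p1 ple_p1l p1_0 p1_l eqxx leqnSn.
  have -> : a < B i by have := hB2 i; lia.
  by move=> /(_ isT isT) /p1_inj [] e; lia.
- exact: h1_mk (leq_trans _ hA).
- exact: h2_mk (fun i => leq_trans _ (hB2 i)).
- by rewrite ge3_mk hm.
Qed.

Definition qq k (u v : 'I_k) : pt k.+1 :=
  [ffun j => nat_of_bool (j == lift ord0 u) + nat_of_bool (j == lift ord0 v)].

Lemma qq_0 k (u v : 'I_k) : qq u v ord0 = 0. Proof. by rewrite ffunE. Qed.
Lemma qq_l k (u v : 'I_k) j : qq u v (lift ord0 j) = nat_of_bool (j == u) + nat_of_bool (j == v).
Proof. by rewrite ffunE !(inj_eq (@lift_inj _ ord0)). Qed.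
Lemma pdeg_qq k (u v : 'I_k) : pdeg (qq u v) = 2.
Proof.
rewrite pdeg0 qq_0; under eq_bigr do rewrite qq_l.
by rewrite big_split /= !sum_ind.
Qed.

Lemma ple_qq k (u v : 'I_k) (x : pt k.+1) :
  1 <= x (lift ord0 u) -> 1 <= x (lift ord0 v) -> (u = v -> 2 <= x (lift ord0 u)) ->
  ple (qq u v) x.
Proof.
move=> hu hv huv; rewrite ple0 qq_0 /=; apply/forallP => j; rewrite qq_l.
case: (eqVneq j u) => [eu|nu]; case: (eqVneq j v) => [ev|nv] /=.
- by subst j; subst v; have := huv erefl; lia.
- by subst j; lia.
- by subst j; lia.
- by [].
Qed.

Lemma max_att (T : eqType) (r : seq T) (P : pred T) (F : T -> nat) :
  \max_(x <- r | P x) F x = 0 \/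
  exists2 x, (x \in r) && P x & F x = \max_(x <- r | P x) F x.
Proof.
elim: r => [|y r IH]; first by left; rewrite big_nil.
rewrite big_cons; case: (boolP (P y)) => Py.
  case: (leqP (\max_(x <- r | P x) F x) (F y)) => h.
    by right; exists y; rewrite ?inE ?eqxx ?Py.
  case: IH => [->|[x /andP [xr Px] e]]; first by left.
  by right; exists x => //; rewrite inE xr orbT.
case: IH => [->|[x /andP [xr Px] e]]; first by left.
by right; exists x => //; rewrite inE xr orbT.
Qed.

Lemma classify k (lam : {fset pt k.+1}) :
  down_closed lam -> (forall y, y \in lam -> pdeg y = 2 -> 1 <= y ord0) ->
  forall x, x \in lam -> x = p0 (x ord0) \/ exists i, x = p1 (x ord0) i.
Proof.
move=> hd h2 x xin.
case: (boolP [exists j, x (lift ord0 j) != 0]) => [/existsP [i xi]|hn].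
  have bad u v : qq u v \in lam -> False.
    by move=> qin; have := h2 _ qin (pdeg_qq u v); rewrite qq_0.
  have h1 : x (lift ord0 i) = 1.
    case E: (x (lift ord0 i)) xi => [|[|n]] // _.
    case: (bad i i); apply: hd xin _; apply: ple_qq; rewrite ?E //.
  right; exists i; apply: dec1 => // j nj.
  case E: (x (lift ord0 j)) => [|n] //; case: (bad i j); apply: hd xin _.
  by apply: ple_qq; rewrite ?h1 ?E // => eij; rewrite eij eqxx in nj.
left; apply: dec0 => j; move: hn; rewrite negb_exists => /forallP /(_ j).
by rewrite negbK => /eqP.
Qed.

Lemma delta_mk k m (lam : {fset pt k.+1}) : delta_set k.+1 m lam ->
  exists A (B : 'I_k -> nat),
    [/\ 2 <= A, (forall i, 2 <= B i <= A),
        m = (A - 2) + \sum_(i < k) (B i - 1), 0 < m & lam = mk A B].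
Proof.
move=> [[[_ _ m0] [[hd _] hsoc _ _ hge3]] hl2].
have h2 y : y \in lam -> pdeg y = 2 -> 1 <= y ord0.
  move=> yin yd; have : y \in layer_eq lam 2 by rewrite in_layer_eq yin yd.
  by case/hl2 => i ->; rewrite !ffunE.
have hcl := classify hd h2.
have p02 : p0 2 \in lam.
  have : p0 2 \in layer_eq lam 2 by apply/hl2; exists ord0; rewrite pe_0.
  by rewrite in_layer_eq => /andP [].
have p11 i : p1 1 i \in lam.
  have : p1 1 i \in layer_eq lam 2 by apply/hl2; exists (lift ord0 i); rewrite pe_l.
  by rewrite in_layer_eq => /andP [].
pose A : nat := \max_(x <- lam) x ord0.
pose B : 'I_k -> nat := fun i => \max_(x <- lam | x (lift ord0 i) != 0) x ord0.
have hA a : (p0 a \in lam) = (a <= A).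
  apply/idP/idP => [ain|aA].
    by have := @leq_bigmax_seq _ (enum_fset lam) xpredT (fun x : pt k.+1 => x ord0) (p0 a) ain isT; rewrite p0_0.
  case: (max_att (enum_fset lam) xpredT (fun x : pt k.+1 => x ord0)) => [e|[x /andP [xin _] e]].
    by apply: hd p02 _; rewrite ple_p0l p0_0; rewrite /A e in aA; lia.
  by apply: hd xin _; rewrite ple_p0l e.
have hB a i : (p1 a i \in lam) = (a <= B i).
  apply/idP/idP => [ain|aB].
    have := @leq_bigmax_seq _ (enum_fset lam) (fun x : pt k.+1 => x (lift ord0 i) != 0) (fun x : pt k.+1 => x ord0) (p1 a i) ain.
    by rewrite p1_0 p1_l eqxx => /(_ isT).
  case: (max_att (enum_fset lam) (fun x : pt k.+1 => x (lift ord0 i) != 0)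
     (fun x : pt k.+1 => x ord0)) => [e|[x /andP [xin xi] e]].
    by apply: hd (p11 i) _; rewrite ple_p1l p1_0 p1_l eqxx; rewrite /B e in aB; lia.
  by apply: hd xin _; rewrite ple_p1l e aB lt0n xi.
have elam : lam = mk A B.
  apply/fsetP => x; apply/idP/idP => [xin|].
    case: (hcl x xin) => [e|[i e]]; rewrite e ?mem_mk_p0 ?mem_mk_p1.
      by rewrite -hA -e.
    by rewrite -hB -e.
  by case/mk_inv => [[a ha ->]|[i [a ha ->]]]; rewrite ?hA ?hB.
have hA2 : 2 <= A by rewrite -hA.
have hBA i : B i <= A.
  rewrite -hA; apply: (hd _ (p1 (B i) i)); first by rewrite hB.
  by rewrite ple_p0l p1_0.
have hB2 i : 2 <= B i.
  case: (leqP 2 (B i)) => // hlt; exfalso.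
  have : p1 1 i \in layer_ge lam 3.
    apply: hsoc; split; first exact: p11.
    move=> y yin; rewrite ple_p1l => /andP [y0 yi].
    case: (hcl y yin) => [e|[j e]]; rewrite e in yi *.
      by rewrite p0_l in yi.
    rewrite p1_l in yi; case: (eqVneq i j) yi => [eij|] // _; subst j.
    have : y ord0 <= B i by rewrite -hB -e.
    move=> hy; have h1 : y ord0 <= 1 by apply: leq_trans hy _; rewrite -ltnS.
    by congr p1; apply/eqP; rewrite eqn_leq h1 y0.
  by rewrite in_layer_ge pdeg_p1 /= andbF.
exists A, B; split => //.
  by move=> i; rewrite hB2 hBA.
by rewrite -hge3 elam ge3_mk.
Qed.

Fixpoint tups (k N : nat) : seq (seq nat) :=
  if k is k'.+1 then [seq j :: t | j <- iota 0 N, t <- tups k' N] else [:: [::]].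

Lemma mem_tups k N t : (t \in tups k N) = (size t == k) && all (fun j => j < N) t.
Proof.
elim: k t => [|k IH] [|j t] //=.
- by apply/negP => /allpairsPdep [? [? [_ _ ]]].
- apply/allpairsPdep/idP => [[j' [t' [hj ht [-> ->]]]]|/andP [/eqP [hs] /andP [hj ha]]].
    by rewrite mem_iota in hj; rewrite IH in ht; case/andP: ht => /eqP -> ->; rewrite eqxx /= andbT.
  by exists j, t; rewrite mem_iota IH hs eqxx ha.
Qed.

Lemma tups_uniq k N : uniq (tups k N).
Proof.
elim: k => [|k IH] //=.
apply: allpairs_uniq_dep; rewrite ?iota_uniq //.
by move=> [j t] [j' t'] _ _ /= [-> ->].
Qed.

Lemma Posz_sum (I : Type) (r : seq I) (F : I -> nat) :
  Posz (\sum_(i <- r) F i) = (\sum_(i <- r) Posz (F i))%R.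
Proof. by elim: r => [|x r IH]; rewrite ?big_nil ?big_cons // PoszD IH. Qed.

Lemma coef_pow N k d :
  (((\sum_(j < N) 'X^j) ^+ k : {poly int})`_d)%R = Posz (count (fun t => sumn t == d) (tups k N)).
Proof.
elim: k d => [|k IH] d.
  by rewrite GRing.expr0 coef1 /=; case: d.
rewrite GRing.exprS; set Q := (_ ^+ k)%R.
rewrite GRing.mulr_suml coef_sum /= count_flatten sumnE big_map big_map Posz_sum.
have -> : iota 0 N = index_iota 0 N by rewrite /index_iota subn0.
rewrite big_mkord; apply: eq_bigr => j _.
rewrite coefXnM IH count_map; case: ltnP => hj.
  rewrite (@eq_count _ _ pred0) ?count_pred0 // => t /=; apply/negbTE; lia.
by congr Posz; apply: eq_count => t /=; apply/eqP/eqP; lia.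
Qed.

Definition Bt k (t : seq nat) : 'I_k -> nat := fun i => nth 0 t i + 2.

Definition params k m : seq (nat * seq nat) :=
  [seq p <- [seq (A, t) | A <- iota 2 m.+1, t <- tups k (A - 1)] |
     (p.1 - 2 + k + sumn p.2 == m) && (0 < m)].

Definition sols k m := [seq mk p.1 (@Bt k p.2) | p <- params k m].

Lemma mk_ext k A (B B' : 'I_k -> nat) : (forall i, B i = B' i) -> mk A B = mk A B'.
Proof.
move=> e; apply/fsetP => x; apply/idP/idP => /mk_inv [[a ha ->]|[i [a ha ->]]].
- by rewrite mem_mk_p0.
- by rewrite mem_mk_p1 -e.
- by rewrite mem_mk_p0.
- by rewrite mem_mk_p1 e.
Qed.

Lemma mk_inj k A A' (B B' : 'I_k -> nat) : mk A B = mk A' B' ->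
  A = A' /\ forall i, B i = B' i.
Proof.
move=> e; split.
  have h1 : A <= A' by rewrite -(mem_mk_p0 A' B') -e mem_mk_p0.
  have h2 : A' <= A by rewrite -(mem_mk_p0 A B) e mem_mk_p0.
  by apply/eqP; rewrite eqn_leq h1 h2.
move=> i.
have h1 : B i <= B' i by rewrite -(mem_mk_p1 A' B') -e mem_mk_p1.
have h2 : B' i <= B i by rewrite -(mem_mk_p1 A B) e mem_mk_p1.
by apply/eqP; rewrite eqn_leq h1 h2.
Qed.

Lemma sum_nth_t k t : size t = k -> \sum_(i < k) nth 0 t i = sumn t.
Proof. by move=> <-; rewrite sumnE (big_nth 0) big_mkord. Qed.

Lemma sum_Bt k t : size t = k -> \sum_(i < k) (@Bt k t i - 1) = sumn t + k.
Proof.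
move=> st; have -> : \sum_(i < k) (@Bt k t i - 1) = \sum_(i < k) (nth 0 t i + 1).
  by apply: eq_bigr => i _; rewrite /Bt; lia.
by rewrite big_split /= sum_nat_const card_ord muln1 sum_nth_t.
Qed.

Lemma mem_params k m A t : ((A, t) \in params k m) =
  [&& 2 <= A <= m.+2, size t == k, all (fun j => j < A - 1) t,
      A - 2 + k + sumn t == m & 0 < m].
Proof.
rewrite mem_filter; apply/andP/and5P => [[/andP [hc h0]]|[hA hs ha hc h0]].
  case/allpairsPdep => A' [t' [hA' ht' [e1 e2]]]; subst A' t'.
  by rewrite mem_iota in hA'; rewrite mem_tups in ht'; case/andP: ht' => -> ->; split => //; lia.
split; first by rewrite hc h0.
by apply/allpairsPdep; exists A, t; rewrite mem_iota mem_tups hs ha; split => //; lia.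
Qed.

Lemma params_uniq k m : uniq (params k m).
Proof.
apply: filter_uniq; apply: allpairs_uniq_dep; rewrite ?iota_uniq //.
  by move=> A _; exact: tups_uniq.
by move=> [A t] [A' t'] _ _ /= [-> ->].
Qed.

Lemma sols_uniq k m : uniq (sols k m).
Proof.
rewrite map_inj_in_uniq ?params_uniq // => [[A t] [A' t']].
rewrite !mem_params => /and5P [_ /eqP st _ _ _] /and5P [_ /eqP st' _ _ _] /= /mk_inj [eA eB].
subst A'; congr pair; apply: (@eq_from_nth _ 0); first by rewrite st st'.
move=> j; rewrite st => hj; have := eB (Ordinal hj); rewrite /Bt /=; lia.
Qed.

Lemma mem_sols k m lam : lam \in sols k m <-> delta_set k.+1 m lam.
Proof.
split.
  case/mapP => [[A t]]; rewrite mem_params => /and5P [hA /eqP st /allP ha /eqP hm h0] /= ->.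
  apply: mk_delta => //; first by case/andP: hA.
    move=> i; rewrite /Bt; have : nth 0 t i \in t by rewrite mem_nth // st.
    by move/ha; case/andP: hA => hA _; lia.
  by rewrite sum_Bt //; lia.
case/delta_mk => A [B [hA hB hm h0 ->]].
pose t := [seq B i - 2 | i <- enum 'I_k].
have st : size t = k by rewrite size_map size_enum_ord.
have nt (i : 'I_k) : nth 0 t i = B i - 2.
  by rewrite (nth_map i) ?nth_ord_enum // size_enum_ord.
have eB i : B i = @Bt k t i by rewrite /Bt nt; have := hB i; lia.
apply/mapP; exists (A, t); last by apply: mk_ext.
have hs : sumn t + k = \sum_(i < k) (B i - 1).
  rewrite -sum_Bt //; apply: eq_bigr => i _; by rewrite -eB.
rewrite mem_params st eqxx h0 andbT /=; apply/and3P; split.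
- rewrite hA /=; lia.
- apply/allP => x /mapP [i _ ->]; have := hB i; lia.
- apply/eqP; lia.
Qed.

Lemma size_sols k m : size (sols k m) =
  \sum_(A <- iota 2 m.+1) count (fun t => (A - 2 + k + sumn t == m) && (0 < m)) (tups k (A - 1)).
Proof.
rewrite size_map size_filter count_flatten sumnE big_map big_map.
by apply: eq_bigr => A _; rewrite count_map.
Qed.


Local Open Scope fset_scope.
Unset Implicit Arguments.

Theorem lemma5p8 (n m : nat) : (0 < n)%N ->
  exists s : seq {fset {ffun 'I_n -> nat}},
    [/\ uniq s,
        (forall lam, lam \in s <-> delta_set n m lam) &
        ((size s)%:Z =
          (if n == 1%N then
             (\sum_(1 <= i < m.+1) 'X^i : {poly int})
           else
             \sum_(1 <= i < m.+1)
               'X^(i + n - 2) * (\sum_(j < i) 'X^j) ^+ (n - 1))`_m)%R].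
Proof.
case: n => // k _; exists (sols k m); split; [exact: sols_uniq | exact: mem_sols |].
rewrite size_sols; case: m => [|m].
  rewrite !big_geq // if_same coef0 big1 // => A _.
  by rewrite (@eq_count _ _ pred0) ?count_pred0 // => t; rewrite andbF.
rewrite (eq_bigr (fun A => count (fun t => (A - 2 + k + sumn t == m.+1)%N) (tups k (A-1)%N)));
  last by move=> A _; apply: eq_count => t; rewrite andbT.
have e2 : iota 2 m.+2 = map (addn 1) (iota 1 m.+1) ++ [:: m.+3].
  by rewrite -[in LHS](addn1 m.+1) iotaD -(iotaDl 1 1).
rewrite e2 big_cat big_map big_seq1.
case: k => [|k].
  rewrite eqxx coef_sum big_nat_recr // coefXn eqxx.
  rewrite [X in (_ = X + _)%R]big1_seq => [|i]; last first.
    by rewrite mem_index_iota coefXn => /andP[_ /andP [h1 h2]]; case: eqP => //; lia.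
  rewrite big1_seq => [|A]; last first.
    by move=> /andP [_]; rewrite mem_iota => h /=; case: eqP => //; lia.
  by rewrite /= !subSS subn0 !addn0 eqxx.
have -> : count (fun t => (m.+3 - 2 + k.+1 + sumn t)%N == m.+1) (tups k.+1 (m.+3 - 1)) = 0%N.
  by rewrite (@eq_count _ _ pred0) ?count_pred0 // => t /=; apply/negbTE; lia.
have -> : (k.+2 == 1%N) = false by [].
rewrite -[LHS]/(Posz (_ + 0)%N) addn0 coef_sum Posz_sum.
have -> : index_iota 1 m.+2 = iota 1 m.+1 by rewrite /index_iota subn1.
apply: eq_big_seq => i; rewrite mem_iota => /andP [h1 h2].
rewrite coefXnM coef_pow.
have -> : (i + k.+2 - 2 = i + k)%N by lia.
have -> : (1 + i - 1 = i)%N by lia.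
have -> : (k.+2 - 1 = k.+1)%N by lia.
case: ltnP => h3.
  by rewrite (@eq_count _ _ pred0) ?count_pred0 // => t /=; apply/negbTE; lia.
by congr Posz; apply: eq_count => t /=; apply/eqP/eqP; lia.
Qed.
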